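(* Let $A=\{a_1,\dots,a_k\}$ be finite and $u_1,u_2:A\to\mathbb{R}$. Consider the following perfect-information game: (1) player 1 proposes $\alpha\in\mathbb{R}$; (2) player 2, observing $\alpha$, decides whether to be the chooser (player 1 then being the proposer) or the proposer (player 1 then being the chooser); (3) the proposer chooses a price vector $p\in P_\alpha=\{p\in\mathbb{R}^k:\sum_j p_j=\alpha\}$; (4) the chooser, observing $p$, selects an option $a_j\in A$ and pays $p_j$ to the proposer. Payoffs are quasi-linear: $u_i(a_j)+t_i$ where $t_i$ is the net transfer received. Then in every (pure) subgame-perfect Nash equilibrium, $\alpha=\frac{k}{2}\bigl(\mathrm{Avg}_1+\mathrm{Avg}_2-\max(u)\bigr)$, the selected option is efficient, and the equilibrium payoffs of players 1 and 2 are $\frac12\max(u)-\frac12(\mathrm{Avg}_2-\mathrm{Avg}_1)$ and $\frac12\max(u)+\frac12(\mathrm{Avg}_2-\mathrm{Avg}_1)$ respectively.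
   Context: $\mathrm{Avg}_i=\frac1k\sum_j u_i(a_j)$, $\max(u)=\max_{a\in A}(u_1(a)+u_2(a))$; an option is efficient if it attains $\max(u)$. Subgame-perfect Nash equilibrium: a profile of pure strategies (player 1: $\alpha$, and, depending on roles, price choices as functions of the history and option choices as functions of the history) such that in every subgame the continuation strategies are mutually best responses. *)

(* Defs.v *)
(* Reals are modelled by an arbitrary realFieldType R
   (the statement is purely algebraic/order-theoretic). *)
From HB Require Import structures.
From mathcomp Require Import all_boot all_order all_algebra.
Set Implicit Arguments. Unset Strict Implicit. Unset Printing Implicit Defensive.
Import Order.TTheory GRing.Theory Num.Theory.
Local Open Scope ring_scope.

Section Game.
Variables (R : realFieldType) (A : finType).

(* max_{a in A} f a  (A is assumed nonempty where used; 0 otherwise) *)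
Definition maxA (f : A -> R) : R :=
  match [pick a : A] with
  | Some a0 => \big[Num.max/f a0]_(a : A) f a
  | None => 0
  end.

Definition avg (f : A -> R) : R := (\sum_(a : A) f a) / (#|A|%:R).

Definition maxu (u1 u2 : A -> R) : R := maxA (fun a => u1 a + u2 a).

Definition efficient (u1 u2 : A -> R) (a : A) : Prop :=
  u1 a + u2 a = maxu u1 u2.

Definition inP (alpha : R) (p : A -> R) : Prop := \sum_(a : A) p a = alpha.

(* Continuation play after alpha has been announced.
   r = true  : player 2 is the chooser, player 1 the proposer (uses p1),
               player 2 chooses with c2;
   r = false : player 2 is the proposer (uses p2), player 1 chooses with c1. *)
Definition selected (r : bool) (p1 : A -> R) (c1 : (A -> R) -> A)
  (p2 : A -> R) (c2 : (A -> R) -> A) : A :=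
  if r then c2 p1 else c1 p2.

Definition payoffs (u1 u2 : A -> R) (r : bool) (p1 : A -> R)
  (c1 : (A -> R) -> A) (p2 : A -> R) (c2 : (A -> R) -> A) : R * R :=
  if r then let a := c2 p1 in (u1 a + p1 a, u2 a - p1 a)
  else let a := c1 p2 in (u1 a - p2 a, u2 a + p2 a).

(* A pure strategy profile:
   - player 1: alpha : R; pr1 : R -> (A -> R) (price vector proposed after
     alpha was announced and player 2 chose to be chooser);
     ch1 : R -> (A -> R) -> A (option chosen after alpha, player 2 chose to
     be proposer, and price vector p was proposed);
   - player 2: role : R -> bool (true = player 2 becomes the chooser);
     pr2 : R -> (A -> R); ch2 : R -> (A -> R) -> A.
   Subgame perfection: in every subgame (the whole game; after any alpha;
   after any alpha and role decision; after any alpha, role and feasible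
   price vector) each player's continuation strategy is a best response to
   the other's, against all alternative continuation strategies. *)
Definition SPNE (u1 u2 : A -> R) (alpha : R) (role : R -> bool)
  (pr1 pr2 : R -> A -> R) (ch1 ch2 : R -> (A -> R) -> A) : Prop :=
  (forall x, inP x (pr1 x)) /\ (forall x, inP x (pr2 x)) /\
  (* subgames at the choice node: history (x, role, p) with p in P_x *)
  (forall x p, inP x p -> forall a : A,
      u2 a - p a <= u2 (ch2 x p) - p (ch2 x p) /\
      u1 a - p a <= u1 (ch1 x p) - p (ch1 x p)) /\
  (* subgames at the pricing node, history (x, player 2 is chooser) *)
  (forall x,
      (forall p1', inP x p1' ->
         (payoffs u1 u2 true p1' (ch1 x) (pr2 x) (ch2 x)).1
           <= (payoffs u1 u2 true (pr1 x) (ch1 x) (pr2 x) (ch2 x)).1) /\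
      (forall c2' : (A -> R) -> A,
         (payoffs u1 u2 true (pr1 x) (ch1 x) (pr2 x) c2').2
           <= (payoffs u1 u2 true (pr1 x) (ch1 x) (pr2 x) (ch2 x)).2)) /\
  (* subgames at the pricing node, history (x, player 2 is proposer) *)
  (forall x,
      (forall p2', inP x p2' ->
         (payoffs u1 u2 false (pr1 x) (ch1 x) p2' (ch2 x)).2
           <= (payoffs u1 u2 false (pr1 x) (ch1 x) (pr2 x) (ch2 x)).2) /\
      (forall c1' : (A -> R) -> A,
         (payoffs u1 u2 false (pr1 x) c1' (pr2 x) (ch2 x)).1
           <= (payoffs u1 u2 false (pr1 x) (ch1 x) (pr2 x) (ch2 x)).1)) /\
  (* subgames after alpha = x was proposed *)
  (forall x,
      (forall (p1' : A -> R) (c1' : (A -> R) -> A), inP x p1' ->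
         (payoffs u1 u2 (role x) p1' c1' (pr2 x) (ch2 x)).1
           <= (payoffs u1 u2 (role x) (pr1 x) (ch1 x) (pr2 x) (ch2 x)).1) /\
      (forall (r' : bool) (p2' : A -> R) (c2' : (A -> R) -> A), inP x p2' ->
         (payoffs u1 u2 r' (pr1 x) (ch1 x) p2' c2').2
           <= (payoffs u1 u2 (role x) (pr1 x) (ch1 x) (pr2 x) (ch2 x)).2)) /\
  (* the whole game *)
  (forall (alpha' : R) (pr1' : R -> A -> R) (ch1' : R -> (A -> R) -> A),
      (forall x, inP x (pr1' x)) ->
      (payoffs u1 u2 (role alpha') (pr1' alpha') (ch1' alpha')
               (pr2 alpha') (ch2 alpha')).1
        <= (payoffs u1 u2 (role alpha) (pr1 alpha) (ch1 alpha)
               (pr2 alpha) (ch2 alpha)).1) /\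
  (forall (role' : R -> bool) (pr2' : R -> A -> R) (ch2' : R -> (A -> R) -> A),
      (forall x, inP x (pr2' x)) ->
      (payoffs u1 u2 (role' alpha) (pr1 alpha) (ch1 alpha)
               (pr2' alpha) (ch2' alpha)).2
        <= (payoffs u1 u2 (role alpha) (pr1 alpha) (ch1 alpha)
               (pr2 alpha) (ch2 alpha)).2).

End Game.

(* Main.v *)
Require Import Defs.
From HB Require Import structures.
From mathcomp Require Import all_boot all_order all_algebra.
From mathcomp Require Import ring lra.
Import Order.TTheory GRing.Theory Num.Theory.
Set Implicit Arguments. Unset Strict Implicit.
Local Open Scope ring_scope.

Section H.
Variables (R : realFieldType) (A : finType).

Lemma maxA_seq (f : A -> R) (x0 : R) (s : seq A) :
  x0 <= \big[Num.max/x0]_(a <- s) f a /\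
  (forall a, a \in s -> f a <= \big[Num.max/x0]_(a <- s) f a) /\
  (x0 = \big[Num.max/x0]_(a <- s) f a \/ exists2 a, a \in s & f a = \big[Num.max/x0]_(a <- s) f a).
Proof.
elim: s => [|b s [IH1 [IH2 IH3]]]; first by rewrite big_nil; split=> //; split=> //; left.
rewrite big_cons; split; first by rewrite le_max IH1 orbT.
split.
  move=> a; rewrite inE => /orP [/eqP->|/IH2 H]; first by rewrite le_max lexx.
  by rewrite le_max H orbT.
rewrite /Order.max; case: ifP => H.
  case: IH3 => [E|[a Ha E]]; first by left.
  by right; exists a => //; rewrite inE Ha orbT.
by right; exists b => //; rewrite inE eqxx.
Qed.

Lemma maxA_ge (f : A -> R) a : f a <= Defs.maxA f.
Proof.
rewrite /Defs.maxA; case: pickP => [a0 _|H]; last by have := H a.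
have [_ [H _]] := maxA_seq f (f a0) (index_enum A).
by apply: H; rewrite mem_index_enum.
Qed.

Lemma maxA_att (f : A -> R) (a1 : A) : exists a, Defs.maxA f = f a.
Proof.
rewrite /Defs.maxA; case: pickP => [a0 _|H]; last by have := H a1.
have [_ [_ [H|[a _ H]]]] := maxA_seq f (f a0) (index_enum A).
  by exists a0.
by exists a.
Qed.

Lemma pricing (u v : A -> R) (M x : R) (ch : (A->R) -> A) (p0 : A -> R) :
  (0 < #|A|)%N ->
  (forall a, u a + v a <= M) -> (exists a, u a + v a = M) ->
  inP x p0 ->
  (forall p, inP x p -> forall a, u a - p a <= u (ch p) - p (ch p)) ->
  (forall p, inP x p -> v (ch p) + p (ch p) <= v (ch p0) + p0 (ch p0)) ->
  u (ch p0) - p0 (ch p0) = (\sum_a u a - x) / #|A|%:R /\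
  v (ch p0) + p0 (ch p0) = M - (\sum_a u a - x) / #|A|%:R.
Proof.
move=> A0 HM [ast Hast] Hp0 Hch Hopt.
set k : R := #|A|%:R.
have kp : 0 < k by rewrite ltr0n.
have kn0 : k != 0 by rewrite gt_eqF.
set Su := \sum_a u a.
set c := (Su - x) / k.
have ck : c * k = Su - x by rewrite /c divfK.
set g := u (ch p0) - p0 (ch p0).
set P0 := v (ch p0) + p0 (ch p0).
have gc : c <= g.
  rewrite /c ler_pdivrMr //.
  have -> : Su - x = \sum_a (u a - p0 a) by rewrite sumrB Hp0.
  have -> : g * k = \sum_(a : A) g by rewrite sumr_const mulr_natr.
  by apply: ler_sum => a _; apply: Hch.
have Pg : P0 + g <= M.
  have := HM (ch p0); rewrite /P0 /g; lra.
have P0ge : M - c <= P0.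
  rewrite leNgt; apply/negP => Hlt.
  set e := M - c - P0.
  have ep : 0 < e by rewrite /e subr_gt0.
  set d := c - e / k.
  pose p' := fun a => u a - d - (if a == ast then e else 0).
  have Hp' : inP x p'.
    rewrite /inP /p' sumrB sumrB -big_mkcond big_pred1_eq sumr_const.
    rewrite -/Su -mulr_natr -/k /d mulrBl divfK // divfK //.
    lra.
  have chast : ch p' = ast.
    apply/eqP; apply/negPn/negP => hne.
    have := Hch p' Hp' ast.
    rewrite /p' eqxx (negbTE hne).
    move: ep; clear; lra.
  have := Hopt p' Hp'; rewrite chast -/P0 /p' eqxx.
  have ekp : 0 < e / k by rewrite divr_gt0.
  move: ekp Hast; rewrite /d /e; move: (e / k) => w.
  lra.
have P0e : P0 = M - c by lra.
split=> //; lra.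
Qed.
End H.

Theorem mainTheorem5 (R : realFieldType) (A : finType) (u1 u2 : A -> R)
  (alpha : R) (role : R -> bool) (pr1 pr2 : R -> A -> R)
  (ch1 ch2 : R -> (A -> R) -> A) :
  (0 < #|A|)%N ->
  SPNE u1 u2 alpha role pr1 pr2 ch1 ch2 ->
  [/\ alpha = (#|A|%:R / 2) * (avg u1 + avg u2 - maxu u1 u2),
      efficient u1 u2
        (selected (role alpha) (pr1 alpha) (ch1 alpha) (pr2 alpha) (ch2 alpha)),
      (payoffs u1 u2 (role alpha) (pr1 alpha) (ch1 alpha) (pr2 alpha)
         (ch2 alpha)).1
        = maxu u1 u2 / 2 - (avg u2 - avg u1) / 2
    & (payoffs u1 u2 (role alpha) (pr1 alpha) (ch1 alpha) (pr2 alpha)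
         (ch2 alpha)).2
        = maxu u1 u2 / 2 + (avg u2 - avg u1) / 2].
Proof.
move=> A0 [Fe1 [Fe2 [Hch [Hpr1 [Hpr2 [Hx [Hg1 Hg2]]]]]]].
have [a1 _] := card_gt0P A0.
set M := maxu u1 u2.
set k : R := #|A|%:R.
have kp : 0 < k by rewrite ltr0n.
have kn0 : k != 0 by rewrite gt_eqF.
set S1 := \sum_a u1 a. set S2 := \sum_a u2 a.
have HM12 : forall a, u1 a + u2 a <= M by move=> a; apply: (maxA_ge (fun a => u1 a + u2 a)).
have HM21 : forall a, u2 a + u1 a <= M by move=> a; rewrite addrC.
have [am Ham] := maxA_att (fun a => u1 a + u2 a) a1.
have EM12 : exists a, u1 a + u2 a = M by exists am; rewrite /M /maxu Ham.
have EM21 : exists a, u2 a + u1 a = M by exists am; rewrite /M /maxu Ham addrC.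
pose P1 x := (payoffs u1 u2 (role x) (pr1 x) (ch1 x) (pr2 x) (ch2 x)).1.
pose P2 x := (payoffs u1 u2 (role x) (pr1 x) (ch1 x) (pr2 x) (ch2 x)).2.
pose sel x := selected (role x) (pr1 x) (ch1 x) (pr2 x) (ch2 x).
have key : forall x, [/\ P1 x + P2 x = M, u1 (sel x) + u2 (sel x) = M,
    (S2 - x)/k <= P2 x, M - (S1 - x)/k <= P2 x &
    (P2 x = (S2 - x)/k \/ P2 x = M - (S1 - x)/k)].
  move=> x.
  have [T2 T1] := pricing (u:=u2) (v:=u1) (ch := ch2 x) (p0 := pr1 x) A0 HM21 EM21 (Fe1 x)
     (fun p Hp a => (Hch x p Hp a).1) (Hpr1 x).1.
  have [G1 G2] := pricing (u:=u1) (v:=u2) (ch := ch1 x) (p0 := pr2 x) A0 HM12 EM12 (Fe2 x)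
     (fun p Hp a => (Hch x p Hp a).2) (Hpr2 x).1.
  have R1 := (Hx x).2 true (pr2 x) (ch2 x) (Fe2 x).
  have R2 := (Hx x).2 false (pr2 x) (ch2 x) (Fe2 x).
  rewrite /= -/S1 -/S2 -/k in T1 T2 G1 G2 R1 R2.
  rewrite /P1 /P2 /sel /selected /=.
  case: (role x) R1 R2 => /= R1 R2; (split; [lra|lra|lra|lra|]); [left|right]; lra.
have [xs Exs] : exists xs, xs = (S1 + S2 - k * M) / 2 by exists ((S1 + S2 - k * M) / 2).
have [K1 K2 K3 K4 K5] := key xs.
have [L1 L2 L3 L4 L5] := key alpha.
have G : P1 xs <= P1 alpha by apply: (Hg1 xs pr1 ch1 Fe1).
have c12 : (S1 - xs) / k + (S2 - xs) / k = M.
  rewrite Exs; field; done.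
have P1xs : P1 xs = (S1 - xs) / k by case: K5 => K5; lra.
have m1 : (S1 - xs) / k <= (S1 - alpha) / k.
  move: L1 L3 L4 G P1xs c12; set q1 := (S1 - xs) / k; set q2 := (S2 - xs) / k;
    set r1 := (S1 - alpha) / k; set r2 := (S2 - alpha) / k; lra.
have m2 : (S2 - alpha) / k <= (S2 - xs) / k.
  move: L1 L3 L4 G P1xs c12; set q1 := (S1 - xs) / k; set q2 := (S2 - xs) / k;
    set r1 := (S1 - alpha) / k; set r2 := (S2 - alpha) / k; lra.
rewrite ler_pM2r ?invr_gt0 // in m1.
rewrite ler_pM2r ?invr_gt0 // in m2.
have Ea : alpha = xs by lra.
have P1a : P1 alpha = (S1 - xs) / k by rewrite -Ea in P1xs *; lra.
split.
- rewrite Ea Exs /avg -/S1 -/S2 -/k -/M; field; done.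
- by rewrite /efficient -/M.
- rewrite -/(P1 alpha) P1a /avg -/S1 -/S2 -/k -/M Exs; field; done.
- have -> : (payoffs u1 u2 (role alpha) (pr1 alpha) (ch1 alpha) (pr2 alpha) (ch2 alpha)).2 = M - P1 alpha by rewrite /P2 in L1; rewrite /P1; lra.
  rewrite P1a /avg -/S1 -/S2 -/k -/M Exs; field; done.
Qed.
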